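(* For every $n\geq 12$ with $n\equiv 4,6,12$ or $14 \pmod{16}$, there exists an almost 2-perfect maximum 8-cycle packing of $K_n$.
   Context: An 8-cycle packing of $K_n$ on vertex set $\mathcal{X}$ is a triple $(\mathcal{X},\mathcal{C},\mathcal{L})$ with $\mathcal{C}$ a collection of pairwise edge-disjoint 8-cycles of $K_n$ and leave $\mathcal{L}$ the set of edges in no cycle of $\mathcal{C}$; it is maximum if $|\mathcal{L}|$ is minimum among all 8-cycle packings of $K_n$. For an 8-cycle $C$, an inside 8-cycle of $C$ is an 8-cycle on the same vertex set sharing no edge with $C$. The packing is almost 2-perfect if one can choose for each $C\in\mathcal{C}$ an inside 8-cycle $C'$ such that $(\mathcal{X},\{C'\},\mathcal{L})$ is again an 8-cycle packing with the same leave. *)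

(* Defs.v *)
From HB Require Import structures.
From mathcomp Require Import all_boot.
Set Implicit Arguments. Unset Strict Implicit. Unset Printing Implicit Defensive.

Definition Kn_edges (n : nat) : {set {set 'I_n}} := [set e : {set 'I_n} | #|e| == 2].

Definition cycle_edges (n : nat) (t : 8.-tuple 'I_n) : {set {set 'I_n}} :=
  [set [set tnth t i; tnth t (ordS i)] | i : 'I_8].

Definition is_8cycle (n : nat) (C : {set {set 'I_n}}) : Prop :=
  exists t : 8.-tuple 'I_n, uniq t /\ C = cycle_edges t.

Definition cycle_vertices (n : nat) (C : {set {set 'I_n}}) : {set 'I_n} := cover C.

Definition is_8cycle_packing (n : nat) (CC : {set {set {set 'I_n}}}) : Prop :=
  (forall C, C \in CC -> is_8cycle C) /\
  (forall C1 C2, C1 \in CC -> C2 \in CC -> C1 != C2 -> [disjoint C1 & C2]).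

Definition leave (n : nat) (CC : {set {set {set 'I_n}}}) : {set {set 'I_n}} :=
  Kn_edges n :\: cover CC.

Definition is_max_8cycle_packing (n : nat) (CC : {set {set {set 'I_n}}}) : Prop :=
  is_8cycle_packing CC /\
  (forall CC' : {set {set {set 'I_n}}}, is_8cycle_packing CC' ->
     #|leave CC| <= #|leave CC'|).

Definition inside_8cycle (n : nat) (C C' : {set {set 'I_n}}) : Prop :=
  is_8cycle C' /\ cycle_vertices C' = cycle_vertices C /\ [disjoint C & C'].

Definition almost_2_perfect (n : nat) (CC : {set {set {set 'I_n}}}) : Prop :=
  exists f : {set {set 'I_n}} -> {set {set 'I_n}},
    (forall C, C \in CC -> inside_8cycle C (f C)) /\
    {in CC &, injective f} /\
    is_8cycle_packing [set f C | C in CC] /\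
    leave [set f C | C in CC] = leave CC.

(* Main.v *)
Require Import Defs.
From mathcomp Require Import all_boot.
From mathcomp Require Import zify.
Set Implicit Arguments. Unset Strict Implicit. Unset Printing Implicit Defensive.


Definition o8 : seq 'I_8 := [:: @Ordinal 8 0 isT; @Ordinal 8 1 isT; @Ordinal 8 2 isT; @Ordinal 8 3 isT; @Ordinal 8 4 isT; @Ordinal 8 5 isT; @Ordinal 8 6 isT; @Ordinal 8 7 isT].
Arguments o8 : simpl never.
Lemma mem_o8 (i : 'I_8) : i \in o8.
Proof. case: i => [[|[|[|[|[|[|[|[|//]]]]]]]] Hi] //. Qed.
Lemma allo8P (P : 'I_8 -> bool) : reflect (forall i, P i) (all P o8).
Proof. apply: (iffP allP) => H i; [apply: H; exact: mem_o8 | move=> _; exact: H]. Qed.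
Lemma haso8P (P : 'I_8 -> bool) : reflect (exists i, P i) (has P o8).
Proof. apply: (iffP hasP) => [[i _ Hi]|[i Hi]]; [by exists i | exists i => //; exact: mem_o8]. Qed.

Section Gen.
Variable T : eqType.
Definition edg (t : 8.-tuple T) (i : 'I_8) : T * T := (tnth t i, tnth t (ordS i)).
Definition sedge (p q : T * T) :=
  ((p.1 == q.1) && (p.2 == q.2)) || ((p.1 == q.2) && (p.2 == q.1)).
Definition disjT (t1 t2 : 8.-tuple T) :=
  all (fun i => all (fun j => ~~ sedge (edg t1 i) (edg t2 j)) o8) o8.
Definition inT (t : 8.-tuple T) (s : seq (8.-tuple T)) :=
  all (fun i => has (fun t' => has (fun j => sedge (edg t i) (edg t' j)) o8) s) o8.
Definition sameV (t t' : 8.-tuple T) := all (fun x => x \in t') t && all (fun x => x \in t) t'.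
Definition goodp (p : 8.-tuple T * 8.-tuple T) :=
  [&& uniq p.1, uniq p.2, disjT p.1 p.2 & sameV p.1 p.2].
Definition Good (L : seq (8.-tuple T * 8.-tuple T)) :=
  [&& all goodp L, pairwise disjT (map fst L), pairwise disjT (map snd L),
      all (fun t => inT t (map snd L)) (map fst L) &
      all (fun t => inT t (map fst L)) (map snd L)].

Lemma inT_catl t s1 s2 : inT t s1 -> inT t (s1 ++ s2).
Proof. by move=> /allP H; apply/allP=> i /H; rewrite has_cat => ->. Qed.
Lemma inT_catr t s1 s2 : inT t s2 -> inT t (s1 ++ s2).
Proof. by move=> /allP H; apply/allP=> i /H; rewrite has_cat orbC => ->. Qed.

Lemma Good_cat L1 L2 : Good L1 -> Good L2 ->
  allrel disjT (map fst L1) (map fst L2) -> allrel disjT (map snd L1) (map snd L2) ->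
  Good (L1 ++ L2).
Proof.
case/and5P=> a1 p1 q1 i1 j1; case/and5P=> a2 p2 q2 i2 j2 r1 r2.
apply/and5P; split; rewrite ?map_cat ?all_cat ?pairwise_cat ?a1 ?a2 ?p1 ?p2 ?q1 ?q2 ?r1 ?r2 //.
- apply/andP; split.
  + by apply/allP=> t /(allP i1) /inT_catl.
  + by apply/allP=> t /(allP i2) /inT_catr.
- apply/andP; split.
  + by apply/allP=> t /(allP j1) /inT_catl.
  + by apply/allP=> t /(allP j2) /inT_catr.
Qed.

Lemma Good_nil : Good [::].
Proof. by []. Qed.

Lemma Good_flatten (X : eqType) (F : X -> seq (8.-tuple T * 8.-tuple T)) (s : seq X) :
  (forall x, x \in s -> Good (F x)) ->
  pairwise (fun x y => allrel disjT (map fst (F x)) (map fst (F y)) &&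
                       allrel disjT (map snd (F x)) (map snd (F y))) s ->
  Good (flatten (map F s)).
Proof.
elim: s => [|x s IH] //= HG; case/andP=> Hx Hs.
apply: Good_cat; first by apply: HG; rewrite inE eqxx.
- by apply: IH => // y Hy; apply: HG; rewrite inE Hy orbT.
- rewrite map_flatten -map_comp; elim: s Hx {IH HG Hs} => [|y s IH] /=; first by rewrite allrel0r.
  by case/andP=> /andP[h _] /IH; rewrite allrel_catr h.
- rewrite map_flatten -map_comp; elim: s Hx {IH HG Hs} => [|y s IH] /=; first by rewrite allrel0r.
  by case/andP=> /andP[_ h] /IH; rewrite allrel_catr h.
Qed.
End Gen.

Lemma pairwise_uniqD (X : eqType) (r : rel X) (s : seq X) :
  uniq s -> (forall x y, x \in s -> y \in s -> x != y -> r x y) -> pairwise r s.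
Proof.
elim: s => [|x s IH] //= /andP[xs us] H; apply/andP; split.
- apply/allP=> y ys; apply: H; rewrite ?inE ?eqxx ?ys ?orbT //.
  by apply: contraNneq xs => ->.
- by apply: IH => // a b ha hb; apply: H; rewrite inE ?ha ?hb orbT.
Qed.

Section Map.
Variables (T T' : eqType) (f : T -> T') (D : pred T).
Hypothesis fi : {in D &, injective f}.
Definition mapPr (p : 8.-tuple T * 8.-tuple T) := (map_tuple f p.1, map_tuple f p.2).

Lemma edg_map (t : 8.-tuple T) i : edg (map_tuple f t) i = (f (tnth t i), f (tnth t (ordS i))).
Proof. by rewrite /edg !tnth_map. Qed.

Lemma sedge_map a b c d : D a -> D b -> D c -> D d ->
  sedge (f a, f b) (f c, f d) = sedge (a, b) (c, d).
Proof. by move=> ha hb hc hd; rewrite /sedge /= !(inj_in_eq fi). Qed.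

Lemma disjT_map (t1 t2 : 8.-tuple T) : all D t1 -> all D t2 ->
  disjT (map_tuple f t1) (map_tuple f t2) = disjT t1 t2.
Proof.
move=> /all_tnthP h1 /all_tnthP h2; rewrite /disjT; apply: eq_all => i; apply: eq_all => j.
by rewrite !edg_map sedge_map.
Qed.

Lemma inT_map (t : 8.-tuple T) (s : seq (8.-tuple T)) : all D t -> all (fun u : 8.-tuple T => all D u) s ->
  inT (map_tuple f t) (map (map_tuple f) s) = inT t s.
Proof.
move=> /all_tnthP h1 /allP h2; rewrite /inT; apply: eq_all => i.
rewrite has_map; apply: eq_in_has => t' /h2 /all_tnthP h3 ; apply: eq_has => j.
by rewrite !edg_map sedge_map.
Qed.

Lemma mem_map_D x s : x \in D -> all D s -> (f x \in map f s) = (x \in s).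
Proof.
move=> hx /allP hs; apply/mapP/idP => [[y ys /fi]|xs]; last by exists x.
by move=> E; rewrite (E hx (hs _ ys)).
Qed.

Lemma sameV_map (t t' : 8.-tuple T) : all D t -> all D t' ->
  sameV (map_tuple f t) (map_tuple f t') = sameV t t'.
Proof.
move=> h1 h2; rewrite /sameV /= !all_map; congr andb; apply: eq_in_all => x hx /=.
- exact: (mem_map_D (allP h1 x hx) h2).
- exact: (mem_map_D (allP h2 x hx) h1).
Qed.

Lemma uniq_map (t : 8.-tuple T) : all D t -> uniq (map_tuple f t) = uniq t.
Proof. by move=> /allP h; rewrite /= map_inj_in_uniq // => x y /h hx /h hy; apply: fi. Qed.

Definition inDp (p : 8.-tuple T * 8.-tuple T) := all D p.1 && all D p.2.

Lemma Good_map L : all inDp L -> Good L -> Good (map mapPr L).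
Proof.
move=> /allP hL /and5P[a p q i j].
have e1 : map fst (map mapPr L) = map (map_tuple f) (map fst L) by rewrite -!map_comp.
have e2 : map snd (map mapPr L) = map (map_tuple f) (map snd L) by rewrite -!map_comp.
have d1 : all (fun u : 8.-tuple T => all D u) (map fst L).
  by apply/allP=> x /mapP[y yL ->]; case/andP: (hL y yL).
have d2 : all (fun u : 8.-tuple T => all D u) (map snd L).
  by apply/allP=> x /mapP[y yL ->]; case/andP: (hL y yL).
apply/and5P; split.
- rewrite all_map; apply/allP=> x xL; have /andP[h1 h2] := hL x xL.
  by have := allP a x xL; rewrite /goodp /= !uniq_map // disjT_map // sameV_map.
- rewrite e1 pairwise_map (eq_in_pairwise (P := fun u : 8.-tuple T => all D u) (r' := @disjT T));
  do ?[exact: p | exact: d1 | by move=> x y hx hy /=; rewrite disjT_map].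
- rewrite e2 pairwise_map (eq_in_pairwise (P := fun u : 8.-tuple T => all D u) (r' := @disjT T));
  do ?[exact: q | exact: d2 | by move=> x y hx hy /=; rewrite disjT_map].
- rewrite e1 e2 all_map; apply/allP=> x xL /=.
  by rewrite inT_map // ?(allP d1) ?(allP i).
- rewrite e1 e2 all_map; apply/allP=> x xL /=.
  by rewrite inT_map // ?(allP d2) ?(allP j).
Qed.
End Map.


Section SetLemmas.
Variable n : nat.
Implicit Types (t : 8.-tuple 'I_n).

Lemma sedge_set (a b c d : 'I_n) : ([set a; b] == [set c; d]) = sedge (a, b) (c, d).
Proof.
rewrite /sedge /=; apply/eqP/idP => [E|].
- have ha : a \in [set c; d] by rewrite -E set21.
  have hb : b \in [set c; d] by rewrite -E set22.
  have hc : c \in [set a; b] by rewrite E set21.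
  have hd : d \in [set a; b] by rewrite E set22.
  move: ha hb hc hd; rewrite !in_set2.
  by do 4 (case/orP=> /eqP ?); subst; rewrite ?eqxx ?orbT.
- by case/orP=> /andP[/eqP-> /eqP->] //; rewrite setUC.
Qed.

Lemma ceP t e : reflect (exists i, e = [set tnth t i; tnth t (ordS i)]) (e \in cycle_edges t).
Proof.
apply: (iffP imsetP) => [[i _ ->]|[i ->]]; first by exists i.
by exists i.
Qed.

Lemma disjT_ce t1 t2 : disjT t1 t2 -> [disjoint cycle_edges t1 & cycle_edges t2].
Proof.
move=> /allo8P H; rewrite -setI_eq0; apply/eqP/setP => e; rewrite !inE.
apply/negP => /andP[/ceP[i ->] /ceP[j /eqP]].
by rewrite sedge_set; move: (allo8P _ (H i) j) => /negP.
Qed.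

Lemma inT_ce t (s : seq (8.-tuple 'I_n)) e : inT t s -> e \in cycle_edges t ->
  exists2 u, u \in s & e \in cycle_edges u.
Proof.
move=> /allo8P H /ceP[i ->]; case/hasP: (H i) => u us /haso8P[j hj].
exists u => //; apply/ceP; exists j; apply/eqP; by rewrite sedge_set.
Qed.

Lemma cv_ce t : cycle_vertices (cycle_edges t) = [set x | x \in t].
Proof.
apply/setP=> x; rewrite inE; apply/bigcupP/idP => [[e /ceP[i ->]]|].
- by rewrite in_set2 => /orP[] /eqP ->; apply: mem_tnth.
- case/tnthP=> i ->; exists [set tnth t i; tnth t (ordS i)]; last exact: set21.
  by apply/ceP; exists i.
Qed.

Lemma ordSS (i : 'I_8) : ordS (ordS i) != i.
Proof. by move: i; apply/allo8P; vm_compute. Qed.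
Lemma ordSn (i : 'I_8) : ordS i != i.
Proof. by move: i; apply/allo8P; vm_compute. Qed.

Lemma ce_inj t : uniq t -> injective (fun i => [set tnth t i; tnth t (ordS i)]).
Proof.
move=> /tuple_uniqP ti i j /eqP; rewrite sedge_set /sedge /=.
case/orP=> /andP[/eqP/ti h1 /eqP/ti h2] //.
by move: (ordSS j); rewrite -h1 h2 eqxx.
Qed.

Lemma card_ce t : uniq t -> #|cycle_edges t| = 8.
Proof. by move=> u; rewrite /cycle_edges card_imset ?card_ord //; apply: ce_inj. Qed.

Lemma ce_Kn t : uniq t -> cycle_edges t \subset Kn_edges n.
Proof.
move=> /tuple_uniqP ti; apply/subsetP=> e /ceP[i ->]; rewrite inE cards2.
suff -> : tnth t i != tnth t (ordS i) by [].
by apply/eqP => /ti/eqP; rewrite eq_sym (negbTE (ordSn i)).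
Qed.

Lemma is8_tuple t : uniq t -> is_8cycle (cycle_edges t).
Proof. by move=> u; exists t. Qed.

Lemma deg_ce t v : uniq t -> #|[set e in cycle_edges t | v \in e]| = 2 * (v \in t).
Proof.
move=> u; have ti := tuple_uniqP _ u.
case: (boolP (v \in t)) => [/tnthP[i ->]|vt]; last first.
  apply/eqP; rewrite cards_eq0; apply/eqP/setP=> e; rewrite !inE.
  apply/negP => /andP[/ceP[i ->]]; rewrite in_set2 => /orP[]/eqP E; move: vt;
    by rewrite E mem_tnth.
have -> : [set e in cycle_edges t | tnth t i \in e] =
  [set [set tnth t (ord_pred i); tnth t (ordS (ord_pred i))]; [set tnth t i; tnth t (ordS i)]].
  apply/setP=> e; rewrite !inE; apply/andP/orP => [[/ceP[j ->]]|].
  - rewrite in_set2 => /orP[]/eqP/ti E.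
    + by right; rewrite E.
    + by left; rewrite E ordSK.
  - case=> /eqP->; split; try (by apply/ceP; eexists).
    + by rewrite ord_predK set22.
    + exact: set21.
rewrite cards2; suff -> : [set tnth t (ord_pred i); tnth t (ordS (ord_pred i))] !=
  [set tnth t i; tnth t (ordS i)] by [].
apply/eqP => /(ce_inj u) E.
by move: (ordSn (ord_pred i)); rewrite {2}E ord_predK eqxx.
Qed.
End SetLemmas.


Lemma pairwise_mem (X : eqType) (r : rel X) (s : seq X) x y :
  symmetric r -> pairwise r s -> x \in s -> y \in s -> x != y -> r x y.
Proof.
move=> sr; elim: s => [|z s IH] //= /andP[/allP hz hs].
rewrite !inE => /orP[/eqP->|xs] /orP[/eqP->|ys]; rewrite ?eqxx // => nxy.
- exact: hz.
- by rewrite sr; apply: hz.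
- exact: IH.
Qed.

Lemma uniq_disj (T : finType) (s : seq {set T}) :
  pairwise (fun A B : {set T} => [disjoint A & B]) s -> all (fun A : {set T} => A != set0) s -> uniq s.
Proof.
elim: s => [|A s IH] //= /andP[/allP hA hs] /andP[nA ns]; rewrite IH // andbT.
apply/negP => /hA; rewrite -setI_eq0 setIid; exact/negP.
Qed.

Section Conv.
Variable n : nat.
Variable L : seq (8.-tuple 'I_n * 8.-tuple 'I_n).
Hypothesis HG : Good L.

Let cs := map (fun p => cycle_edges p.1) L.
Let ds := map (fun p => cycle_edges p.2) L.

Lemma ce_neq0 (t : 8.-tuple 'I_n) : cycle_edges t != set0.
Proof.
apply/set0Pn; exists [set tnth t ord0; tnth t (ordS ord0)]; by apply/ceP; exists ord0.
Qed.

Let gp : all (@goodp _) L. Proof. by case/and5P: HG. Qed.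
Let pw1 : pairwise (@disjT _) (map fst L). Proof. by case/and5P: HG. Qed.
Let pw2 : pairwise (@disjT _) (map snd L). Proof. by case/and5P: HG. Qed.
Let in1 : all (fun t => inT t (map snd L)) (map fst L). Proof. by case/and5P: HG. Qed.
Let in2 : all (fun t => inT t (map fst L)) (map snd L). Proof. by case/and5P: HG. Qed.

Let dsym (T : finType) : symmetric (fun A B : {set T} => [disjoint A & B]).
Proof. by move=> A B; rewrite disjoint_sym. Qed.

Lemma pw_cs : pairwise (fun A B : {set {set 'I_n}} => [disjoint A & B]) cs.
Proof.
rewrite /cs pairwise_map; move: pw1; rewrite pairwise_map; apply: sub_pairwise.
by move=> p q /=; apply: disjT_ce.
Qed.
Lemma pw_ds : pairwise (fun A B : {set {set 'I_n}} => [disjoint A & B]) ds.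
Proof.
rewrite /ds pairwise_map; move: pw2; rewrite pairwise_map; apply: sub_pairwise.
by move=> p q /=; apply: disjT_ce.
Qed.
Lemma uniq_cs : uniq cs.
Proof. by apply: uniq_disj pw_cs _; apply/allP=> C /mapP[p _ ->]; apply: ce_neq0. Qed.
Lemma uniq_ds : uniq ds.
Proof. by apply: uniq_disj pw_ds _; apply/allP=> C /mapP[p _ ->]; apply: ce_neq0. Qed.

Definition CCL : {set {set {set 'I_n}}} := [set C | C \in cs].
Definition fL (C : {set {set 'I_n}}) := nth set0 ds (index C cs).

Lemma fL_P p : p \in L -> fL (cycle_edges p.1) = cycle_edges p.2.
Proof.
move=> pL; have iL : index p L < size L by rewrite index_mem.
have E : nth set0 cs (index p L) = cycle_edges p.1 by rewrite /cs (nth_map p) // nth_index.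
rewrite /fL -E index_uniq ?size_map // ?uniq_cs // /ds (nth_map p) // nth_index //.
Qed.

Lemma goodp_mem p : p \in L -> goodp p.
Proof. by move/(allP gp). Qed.

Lemma packing_CCL : is_8cycle_packing CCL.
Proof.
split.
- move=> C; rewrite inE => /mapP[p pL ->]; apply: is8_tuple.
  by case/and4P: (goodp_mem pL).
- move=> C1 C2; rewrite !inE => h1 h2 ne; apply: (pairwise_mem _ pw_cs h1 h2 ne) => A B; exact: disjoint_sym.
Qed.

Lemma image_CCL : [set fL C | C in CCL] = [set D | D \in ds].
Proof.
apply/setP=> D; rewrite inE; apply/imsetP/idP => [[C]|].
- by rewrite inE => /mapP[p pL ->] ->; rewrite fL_P //; apply: map_f.
- case/mapP=> p pL ->; exists (cycle_edges p.1); last by rewrite fL_P.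
  by rewrite /CCL inE; apply: (map_f (fun p => cycle_edges p.1)).
Qed.

Lemma cover_eq : cover [set D | D \in ds] = cover CCL.
Proof.
apply/setP=> e; apply/bigcupP/bigcupP => [[D]|[C]].
- rewrite inE => /mapP[p pL ->] he.
  have := allP in2 p.2 (map_f _ pL) => hi.
  case: (inT_ce hi he) => u /mapP[q qL ->] hq; exists (cycle_edges q.1) => //.
  by rewrite inE; apply: map_f.
- rewrite inE => /mapP[p pL ->] he.
  have := allP in1 p.1 (map_f _ pL) => hi.
  case: (inT_ce hi he) => u /mapP[q qL ->] hq; exists (cycle_edges q.2) => //.
  by rewrite inE; apply: map_f.
Qed.

Lemma a2p_CCL : almost_2_perfect CCL.
Proof.
exists fL; split; [|split; [|split]].
- move=> C; rewrite inE => /mapP[p pL ->]; rewrite fL_P //.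
  case/and4P: (goodp_mem pL) => u1 u2 dj sv; split; first exact: is8_tuple.
  split; last exact: disjT_ce.
  rewrite !cv_ce; apply/setP=> x; rewrite !inE; case/andP: sv => /allP s1 /allP s2.
  by apply/idP/idP => [/s2|/s1].
- move=> C1 C2; rewrite !inE => /mapP[p pL ->] /mapP[q qL ->]; rewrite !fL_P // => E.
  have ip : index p L < size L by rewrite index_mem.
  have iq : index q L < size L by rewrite index_mem.
  have : nth set0 ds (index p L) = nth set0 ds (index q L).
    by rewrite /ds !(nth_map p) // !nth_index.
  move/eqP; rewrite nth_uniq ?size_map // ?uniq_ds // => /eqP Eq.
  by rewrite -(nth_index p pL) Eq nth_index.
- rewrite image_CCL; split.
  + move=> D; rewrite inE => /mapP[p pL ->]; apply: is8_tuple.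
    by case/and4P: (goodp_mem pL).
  + move=> D1 D2; rewrite !inE => h1 h2 ne; apply: (pairwise_mem _ pw_ds h1 h2 ne) => A B; exact: disjoint_sym.
- by rewrite /leave image_CCL cover_eq.
Qed.

Lemma card_CCL : #|CCL| = size L.
Proof. by rewrite cardsE (card_uniqP uniq_cs) size_map. Qed.
End Conv.


Section LB.
Variable n : nat.
Implicit Types (E : {set {set 'I_n}}) (CC : {set {set {set 'I_n}}}).

Lemma deg_sum E (v : 'I_n) : #|[set e in E | v \in e]| = \sum_(e in E) (v \in e).
Proof.
rewrite -sum1_card [RHS]big_mkcond [LHS]big_mkcond /=; apply: eq_bigr => e _.
by rewrite !inE; case: (e \in E); case: (v \in e).
Qed.

Lemma card_sum (e : {set 'I_n}) : #|e| = \sum_(v : 'I_n) (v \in e).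
Proof.
rewrite -sum1_card [LHS]big_mkcond /=; apply: eq_bigr => v _.
by case: (v \in e).
Qed.

Lemma sum_deg E : E \subset Kn_edges n -> \sum_(v : 'I_n) #|[set e in E | v \in e]| = 2 * #|E|.
Proof.
move=> sE; under eq_bigr => v _ do rewrite deg_sum.
rewrite exchange_big /= -sum1_card big_distrr /=; apply: eq_bigr => e eE.
by rewrite -card_sum; move/subsetP: sE => /(_ e eE); rewrite inE => /eqP->.
Qed.

Lemma deg_Kn (v : 'I_n) : #|[set e in Kn_edges n | v \in e]| = n.-1.
Proof.
have -> : [set e in Kn_edges n | v \in e] = [set [set v; w] | w in [set~ v]].
  apply/setP=> e; rewrite !inE; apply/andP/imsetP => [[/cards2P[x [y [nxy ->]]]]|[w]].
  - case/set2P=> ->; first by exists y; rewrite // !inE eq_sym.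
    by exists x; rewrite 1?setUC // !inE.
  - rewrite !inE => nwv ->; split; last exact: set21.
    by move: nwv; rewrite cards2 eq_sym => ->.
rewrite card_imset ?cardsC1 ?card_ord // => w w' /eqP; rewrite sedge_set /sedge /=.
by rewrite eqxx /= => /orP[/eqP //|/andP[/eqP <- /eqP ->]].
Qed.

Lemma cover_sub CC : is_8cycle_packing CC -> cover CC \subset Kn_edges n.
Proof.
case=> H1 _; apply/subsetP=> e /bigcupP[C /H1[t [u ->]]].
by move/subsetP: (ce_Kn u); apply.
Qed.

Lemma card_cover CC : is_8cycle_packing CC -> #|cover CC| = 8 * #|CC|.
Proof.
case=> H1 H2.
have tr : trivIset CC by apply/trivIsetP => A B hA hB; exact: H2.
have /eqP-> : #|cover CC| == \sum_(A in CC) #|A| by rewrite (leq_card_cover CC).2.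
rewrite (eq_bigr (fun _ => 8)) ?sum_nat_const 1?mulnC // => A /H1 [t [u ->]].
exact: card_ce.
Qed.

Lemma card_Kn : #|Kn_edges n| = 'C(n, 2).
Proof. by rewrite /Kn_edges card_draws card_ord. Qed.

Lemma leave_card CC : is_8cycle_packing CC -> #|leave CC| + 8 * #|CC| = 'C(n, 2).
Proof.
move=> P; rewrite /leave cardsDS ?cover_sub // card_Kn -card_cover //.
have := subset_leq_card (cover_sub P); rewrite card_Kn; lia.
Qed.

Lemma deg_cover CC (v : 'I_n) : is_8cycle_packing CC ->
  exists k, #|[set e in cover CC | v \in e]| = 2 * k.
Proof.
case=> H1 H2.
have tr : trivIset CC by apply/trivIsetP => A B hA hB; exact: H2.
exists (\sum_(C in CC) (v \in cycle_vertices C)).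
rewrite deg_sum big_distrr /= (big_trivIset _ tr) /=.
apply: eq_bigr => C /H1 [t [u ->]]; rewrite -deg_sum deg_ce // cv_ce inE //.
Qed.

Lemma leave_lb CC : is_8cycle_packing CC -> ~~ odd n -> n <= 2 * #|leave CC|.
Proof.
move=> P ev.
have sK : cover CC \subset Kn_edges n by apply: cover_sub.
have sL : leave CC \subset Kn_edges n by apply: subsetDl.
rewrite -sum_deg //.
apply: (@leq_trans (\sum_(v : 'I_n) 1)); first by rewrite sum1_card card_ord.
apply: leq_sum => v _.
have hK := deg_Kn v.
have [k hk] := deg_cover v P.
have split : #|[set e in Kn_edges n | v \in e]| =
  #|[set e in leave CC | v \in e]| + #|[set e in cover CC | v \in e]|.
  rewrite -cardsUI.
  have -> : [set e in leave CC | v \in e] :&: [set e in cover CC | v \in e] = set0.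
    by apply/setP=> e; rewrite !inE; case: (e \in cover CC); rewrite ?andbF.
  rewrite cards0 addn0; apply: eq_card => e; rewrite !inE.
  case ec: (e \in cover CC); rewrite ?andbF ?orbF /=.
  - by have := subsetP sK _ ec; rewrite inE => ->.
  - by [].
have hn := ltn_ord v.
have ev2 : n %% 2 = 0 by rewrite modn2; case: (odd n) ev.
rewrite hK hk -subn1 in split; move: split; set l := #|_|; lia.
Qed.
End LB.


Definition K44 : seq (8.-tuple nat * 8.-tuple nat) :=
  [:: ([tuple 0;4;1;5;2;6;3;7], [tuple 0;5;3;4;2;7;1;6]);
      ([tuple 0;5;3;4;2;7;1;6], [tuple 0;4;1;5;2;6;3;7])].
Definition K8I : seq (8.-tuple nat * 8.-tuple nat) :=
  [:: ([tuple 0;7;5;1;3;6;4;2], [tuple 0;4;1;2;7;3;5;6]);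
      ([tuple 1;2;6;0;5;3;4;7], [tuple 0;7;5;2;4;6;1;3]);
      ([tuple 0;4;1;6;5;2;7;3], [tuple 0;5;1;7;4;3;6;2])].
Definition G10 : seq (8.-tuple nat * 8.-tuple nat) :=
  [:: ([tuple 3;4;0;7;9;6;8;5], [tuple 0;3;6;5;7;8;4;9]);
      ([tuple 4;9;1;8;0;3;6;2], [tuple 0;6;9;3;8;2;1;4]);
      ([tuple 4;6;1;2;5;7;3;8], [tuple 1;5;8;6;2;7;4;3]);
      ([tuple 1;3;9;5;0;2;8;7], [tuple 0;8;1;9;2;5;3;7]);
      ([tuple 5;6;0;9;2;7;4;1], [tuple 0;2;4;6;1;7;9;5])].
Definition B12 : seq (8.-tuple nat * 8.-tuple nat) :=
  [:: ([tuple 0;4;8;1;10;7;2;11], [tuple 0;10;2;1;11;4;7;8]);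
      ([tuple 0;8;11;6;3;10;2;5], [tuple 0;11;2;8;10;6;5;3]);
      ([tuple 2;8;10;4;9;5;6;1], [tuple 1;5;10;9;2;6;8;4]);
      ([tuple 2;6;8;3;5;7;1;9], [tuple 1;3;6;9;7;2;5;8]);
      ([tuple 6;10;5;1;3;11;7;9], [tuple 1;6;11;5;9;3;10;7]);
      ([tuple 5;8;7;0;9;3;4;11], [tuple 0;5;7;3;8;11;9;4]);
      ([tuple 3;7;4;1;11;9;10;0], [tuple 0;7;11;3;4;10;1;9])].
Definition B14 : seq (8.-tuple nat * 8.-tuple nat) :=
  [:: ([tuple 0;4;13;8;12;7;11;3], [tuple 0;13;3;12;11;4;7;8]);
      ([tuple 0;11;8;2;5;7;9;12], [tuple 0;5;8;12;2;7;11;9]);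
      ([tuple 0;7;4;12;10;6;3;5], [tuple 0;4;3;7;10;5;6;12]);
      ([tuple 0;8;10;1;11;4;3;13], [tuple 0;3;11;13;1;8;4;10]);
      ([tuple 4;8;5;6;1;12;3;9], [tuple 1;3;8;6;9;5;12;4]);
      ([tuple 3;8;1;9;2;6;13;10], [tuple 1;6;3;9;10;8;13;2]);
      ([tuple 6;8;7;10;2;11;5;12], [tuple 2;8;11;6;10;12;7;5]);
      ([tuple 3;7;2;13;9;10;5;1], [tuple 1;9;2;10;3;5;13;7]);
      ([tuple 4;10;0;9;11;13;7;1], [tuple 0;7;9;4;13;10;1;11]);
      ([tuple 5;13;1;2;12;11;6;9], [tuple 1;12;9;13;6;2;11;5])].

Definition allE (Q : nat * nat -> bool) (L : seq (8.-tuple nat * 8.-tuple nat)) :=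
  all (fun p => all (fun i => Q (edg p.1 i)) o8 && all (fun i => Q (edg p.2 i)) o8) L.

Lemma K44_good : Good K44. Proof. by vm_compute. Qed.
Lemma K8I_good : Good K8I. Proof. by vm_compute. Qed.
Lemma G10_good : Good G10. Proof. by vm_compute. Qed.
Lemma B12_good : Good B12. Proof. by vm_compute. Qed.
Lemma B14_good : Good B14. Proof. by vm_compute. Qed.
Lemma K44_reg : allE (fun p => [&& p.1 < 8, p.2 < 8 & (p.1 < 4) != (p.2 < 4)]) K44.
Proof. by vm_compute. Qed.
Lemma K8I_reg : allE (fun p => (p.1 < 8) && (p.2 < 8)) K8I.
Proof. by vm_compute. Qed.
Lemma G10_reg : allE (fun p => [&& p.1 < 10, p.2 < 10 & (p.1 < 8) || (p.2 < 8)]) G10.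
Proof. by vm_compute. Qed.
Lemma B12_reg : allE (fun p => (p.1 < 12) && (p.2 < 12)) B12.
Proof. by vm_compute. Qed.
Lemma B14_reg : allE (fun p => (p.1 < 14) && (p.2 < 14)) B14.
Proof. by vm_compute. Qed.


Section Region.
Variable m : nat.
Definition inR (R : nat -> nat -> bool) (t : 8.-tuple 'I_m) :=
  all (fun i => R (minn (tnth t i) (tnth t (ordS i))) (maxn (tnth t i) (tnth t (ordS i)))) o8.

Lemma disjT_R (R1 R2 : nat -> nat -> bool) (t1 t2 : 8.-tuple 'I_m) : inR R1 t1 -> inR R2 t2 ->
  (forall x y, x <= y -> R1 x y -> R2 x y -> False) -> disjT t1 t2.
Proof.
move=> /allo8P h1 /allo8P h2 H; apply/allo8P => i; apply/allo8P => j.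
apply/negP; rewrite /sedge /edg /= => /orP[] /andP[/eqP e1 /eqP e2].
- move: (h1 i) (h2 j); rewrite e1 e2; apply: H; lia.
- move: (h1 i) (h2 j); rewrite e1 e2 (minnC (tnth t2 (ordS j))) (maxnC (tnth t2 (ordS j))).
  apply: H; lia.
Qed.

Lemma inR_mono (R1 R2 : nat -> nat -> bool) (t : 8.-tuple 'I_m) : (forall x y, x <= y -> R1 x y -> R2 x y) -> inR R1 t -> inR R2 t.
Proof. move=> H /allo8P h; apply/allo8P => i; apply: H (h i); lia. Qed.

Lemma allrel_R (R1 R2 : nat -> nat -> bool) (s1 s2 : seq (8.-tuple 'I_m)) : all (inR R1) s1 -> all (inR R2) s2 ->
  (forall x y, x <= y -> R1 x y -> R2 x y -> False) -> allrel (@disjT _) s1 s2.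
Proof.
move=> /allP h1 /allP h2 H; apply/allrelP => x y /h1 hx /h2 hy; exact: disjT_R hx hy H.
Qed.

Lemma inR_design (phi : nat -> 'I_m) (Q : nat * nat -> bool) (R : nat -> nat -> bool)
  (Ld : seq (8.-tuple nat * 8.-tuple nat)) : allE Q Ld ->
  (forall x y, Q (x, y) -> R (minn (phi x) (phi y)) (maxn (phi x) (phi y))) ->
  all (inR R) (map fst (map (mapPr phi) Ld)) && all (inR R) (map snd (map (mapPr phi) Ld)).
Proof.
move=> /allP hL H; apply/andP; split; apply/allP => u /mapP[p /mapP[q qL ->] ->] /=;
  case/andP: (hL q qL) => /allo8P a1 /allo8P a2; apply/allo8P => i; rewrite !tnth_map;
  apply: H; [exact: a1 | exact: a2].
Qed.

Lemma allE_mono (Q1 Q2 : nat * nat -> bool) Ld : (forall p, Q1 p -> Q2 p) -> allE Q1 Ld -> allE Q2 Ld.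
Proof.
move=> H /allP h; apply/allP => p /h /andP[/allo8P a1 /allo8P a2].
by apply/andP; split; apply/allo8P => i; apply: H.
Qed.

Lemma allE_D (Q : nat * nat -> bool) k Ld : allE Q Ld -> (forall x y, Q (x, y) -> x < k) ->
  all (inDp (fun x => x < k)) Ld.
Proof.
move=> /allP h H; apply/allP => p /h /andP[/allo8P a1 /allo8P a2].
by apply/andP; split; apply/all_tnthP => i; [apply: (H _ _ (a1 i)) | apply: (H _ _ (a2 i))].
Qed.
End Region.


Definition Pn (n : nat) := exists L : seq (8.-tuple 'I_n * 8.-tuple 'I_n),
  Good L /\ 16 * size L + n + 8 = n * (n - 1).

Lemma lnm n : n <= n.+4.+4. Proof. by do 8 apply: leqW. Qed.

Section Step.
Variables (n e PP : nat).
Hypothesis hn : n = e + 4 * PP.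
Hypothesis he : (e == 0) || (e == 2).

Definition vK (a q x : nat) := if x < 4 then n + 4 * a + x else e + 4 * q + (x - 4).
Definition phiK (a q x : nat) : 'I_(n.+4.+4) := inord (vK a q x).
Definition vG (x : nat) := if x < 8 then n + x else x - 8.
Definition phiG (x : nat) : 'I_(n.+4.+4) := inord (vG x).
Definition phiW (x : 'I_n) : 'I_(n.+4.+4) := widen_ord (lnm n) x.

Lemma vK_lt a q x : a < 2 -> q < PP -> x < 8 -> vK a q x < n.+4.+4.
Proof. rewrite /vK; case: ifP; lia. Qed.
Lemma vG_lt x : x < 8 + e -> vG x < n.+4.+4.
Proof. rewrite /vG; case: ifP; move: he; lia. Qed.

Lemma phiK_val a q x : a < 2 -> q < PP -> x < 8 -> (phiK a q x : nat) = vK a q x.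
Proof. by move=> ha hq hx; rewrite /phiK inordK // vK_lt. Qed.
Lemma phiG_val x : x < 8 + e -> (phiG x : nat) = vG x.
Proof. by move=> hx; rewrite /phiG inordK // vG_lt. Qed.

Lemma phiK_inj a q : a < 2 -> q < PP -> {in (fun x : nat => x < 8) &, injective (phiK a q)}.
Proof.
move=> ha hq x y hx hy /(congr1 (@nat_of_ord _)); rewrite !phiK_val //.
rewrite /vK; move: hx hy; rewrite /in_mem /=; case: ifP; case: ifP; lia.
Qed.

Lemma phiG_inj : {in (fun x : nat => x < 8 + e) &, injective phiG}.
Proof.
move=> x y hx hy /(congr1 (@nat_of_ord _)); rewrite !phiG_val //.
rewrite /vG; move: hx hy; rewrite /in_mem /=; case: ifP; case: ifP; move: he; lia.
Qed.

Definition RK (a q lo hi : nat) :=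
  (e + 4 * q <= lo < e + 4 * q + 4) && (n + 4 * a <= hi < n + 4 * a + 4).
Definition RG (lo hi : nat) := (n <= lo) || ((lo < e) && (n <= hi)).
Definition RO (lo hi : nat) := hi < n.
Definition RN (lo hi : nat) := n <= hi.

Lemma regK a q x y : a < 2 -> q < PP ->
  [&& x < 8, y < 8 & (x < 4) != (y < 4)] ->
  RK a q (minn (phiK a q x) (phiK a q y)) (maxn (phiK a q x) (phiK a q y)).
Proof.
move=> ha hq /and3P[hx hy hxy]; rewrite !phiK_val // /RK /vK.
move: hxy; case: ifP; case: ifP; lia.
Qed.

Lemma regG x y : [&& x < 8 + e, y < 8 + e & (x < 8) || (y < 8)] ->
  RG (minn (phiG x) (phiG y)) (maxn (phiG x) (phiG y)).
Proof.
move=> /and3P[hx hy hxy]; rewrite !phiG_val // /RG /vG.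
move: hxy; case: ifP; case: ifP; move: he; lia.
Qed.

Definition Gd := if e == 0 then K8I else G10.
Definition QG (p : nat * nat) := [&& p.1 < 8 + e, p.2 < 8 + e & (p.1 < 8) || (p.2 < 8)].
Definition QK (p : nat * nat) := [&& p.1 < 8, p.2 < 8 & (p.1 < 4) != (p.2 < 4)].

Lemma Gd_good : Good Gd.
Proof. by rewrite /Gd; case: ifP => _; [exact: K8I_good | exact: G10_good]. Qed.

Lemma Gd_reg : allE QG Gd.
Proof. by rewrite /Gd /QG; case/orP: he => /eqP ->; vm_compute. Qed.

Lemma size_Gd : size Gd = if e == 0 then 3 else 5.
Proof. by rewrite /Gd; case: ifP. Qed.

Definition pcs := [seq (a, q) | a <- iota 0 2, q <- iota 0 PP].
Definition pieceK (pc : nat * nat) := map (mapPr (phiK pc.1 pc.2)) K44.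
Definition pieceG := map (mapPr phiG) Gd.
Definition newL := flatten (map pieceK pcs) ++ pieceG.

Lemma pcs_mem pc : pc \in pcs -> (pc.1 < 2) && (pc.2 < PP).
Proof. by case/allpairsP=> [[a q] [ha hq ->]]; move: ha hq; rewrite !mem_iota /=; lia. Qed.

Lemma pieceK_good pc : pc \in pcs -> Good (pieceK pc).
Proof.
move/pcs_mem => /andP[ha hq]; apply: (Good_map (D := fun x : nat => x < 8)).
- exact: phiK_inj.
- by vm_compute.
- exact: K44_good.
Qed.

Lemma pieceK_reg pc : pc \in pcs ->
  all (inR (RK pc.1 pc.2)) (map fst (pieceK pc)) && all (inR (RK pc.1 pc.2)) (map snd (pieceK pc)).
Proof.
move/pcs_mem => /andP[ha hq]; apply: inR_design K44_reg _ => x y; exact: regK.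
Qed.

Lemma pieceG_good : Good pieceG.
Proof.
apply: (Good_map (D := fun x : nat => x < 8 + e)).
- exact: phiG_inj.
- by rewrite /Gd; case/orP: he => /eqP ->; vm_compute.
- exact: Gd_good.
Qed.

Lemma pieceG_reg : all (inR RG) (map fst pieceG) && all (inR RG) (map snd pieceG).
Proof. apply: inR_design Gd_reg _ => x y; exact: regG. Qed.

Lemma RK_disj a q a' q' : q < PP -> q' < PP -> (a, q) != (a', q') ->
  forall x y, x <= y -> RK a q x y -> RK a' q' x y -> False.
Proof.
move=> hq hq' ne x y _ /andP[/andP[h1 h2] /andP[h3 h4]] /andP[/andP[h5 h6] /andP[h7 h8]].
have eq : q = q' by lia.
have ea : a = a' by lia.
by move: ne; rewrite eq ea eqxx.
Qed.

Lemma RKG_disj a q : q < PP -> forall x y, x <= y -> RK a q x y -> RG x y -> False.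
Proof. move=> hq x y _; rewrite /RK /RG; lia. Qed.

Lemma mem_map_flatten (X Y : eqType) (g : X -> Y) (ss : seq (seq X)) y :
  y \in map g (flatten ss) -> exists2 s, s \in ss & y \in map g s.
Proof. by rewrite map_flatten => /flattenP[s' /mapP[s hs ->] hy]; exists s. Qed.

Lemma flat_reg u : u \in map fst (flatten (map pieceK pcs)) ++ map snd (flatten (map pieceK pcs)) ->
  exists2 pc, pc \in pcs & inR (RK pc.1 pc.2) u.
Proof.
rewrite mem_cat => /orP[] /mem_map_flatten [x /mapP[pc hpc ->] hu]; exists pc => //.
- by case/andP: (pieceK_reg hpc) => h1 _; apply: (allP h1).
- by case/andP: (pieceK_reg hpc) => _ h2; apply: (allP h2).
Qed.

Lemma newL_good : Good newL.
Proof.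
have uq : uniq pcs.
  rewrite allpairs_uniq ?iota_uniq // => [[a q] [a' q']] _ _ /= [-> ->] //.
apply: Good_cat.
- apply: Good_flatten => [pc /pieceK_good //|].
  apply: (@pairwise_uniqD _ _ pcs uq) => pc pc' h h' ne.
  move: (pieceK_reg h) (pieceK_reg h') => /andP[a1 a2] /andP[b1 b2].
  case/andP: (pcs_mem h) => _ hq; case/andP: (pcs_mem h') => _ hq'.
  have nd : forall x y, x <= y -> RK pc.1 pc.2 x y -> RK pc'.1 pc'.2 x y -> False.
    by apply: RK_disj => //; move: ne; case: pc {h a1 a2 hq} => ? ?; case: pc' {h' b1 b2 hq'}.
  apply/andP; split.
  - exact: (allrel_R a1 b1 nd).
  - exact: (allrel_R a2 b2 nd).
- exact: pieceG_good.
- apply/allrelP => u v hu hv.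
  have [pc hpc hR] : exists2 pc, pc \in pcs & inR (RK pc.1 pc.2) u.
    by apply: flat_reg; rewrite mem_cat hu.
  case/andP: pieceG_reg => g1 _.
  apply: disjT_R hR (allP g1 _ hv) _; apply: RKG_disj; by case/andP: (pcs_mem hpc).
- apply/allrelP => u v hu hv.
  have [pc hpc hR] : exists2 pc, pc \in pcs & inR (RK pc.1 pc.2) u.
    by apply: flat_reg; rewrite mem_cat hu orbT.
  case/andP: pieceG_reg => _ g2.
  apply: disjT_R hR (allP g2 _ hv) _; apply: RKG_disj; by case/andP: (pcs_mem hpc).
Qed.
End Step.


Lemma sumn_const2 (X : Type) (F : X -> nat) (s : seq X) :
  (forall x, F x = 2) -> sumn (map F s) = 2 * size s.
Proof. move=> H; elim: s => //= x s ->; rewrite H; lia. Qed.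

Lemma phiW_lt n (x : 'I_n) : (phiW x : nat) < n.
Proof. exact: ltn_ord x. Qed.

Lemma maxW_lt n (x y : 'I_n) : maxn (phiW x) (phiW y) < n.
Proof. by rewrite gtn_max !phiW_lt. Qed.

Lemma step n e PP : n = e + 4 * PP -> (e == 0) || (e == 2) -> Pn n -> Pn n.+4.+4.
Proof.
move=> hn he [L [HG HS]].
pose old := map (mapPr (phiW (n:=n))) L.
exists (old ++ newL n e PP); split.
- apply: Good_cat.
  + apply: (Good_map (D := fun _ : 'I_n => true)) => //.
    * by move=> x y _ _ /(congr1 (@nat_of_ord _)) /= /ord_inj.
    * by apply/allP => p _; apply/andP; split; apply/allP.
  + exact: newL_good hn he.
  + apply: (allrel_R (R1 := fun lo hi => hi < n) (R2 := fun lo hi => n <= hi)); last lia.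
    * apply/allP => u /mapP[p /mapP[q qL ->] ->] /=; apply/allo8P => i.
      rewrite !tnth_map; exact: maxW_lt.
    * apply/allP => u; rewrite /newL map_cat mem_cat => /orP[] hu.
      - have [pc hpc hR] := flat_reg hn he (u := u) (ltac:(by rewrite mem_cat hu)).
        by apply: inR_mono hR => x y _; rewrite /RK; lia.
      - case/andP: (pieceG_reg hn he) => g1 _.
        by apply: inR_mono (allP g1 _ hu) => x y; rewrite /RG; lia.
  + apply: (allrel_R (R1 := fun lo hi => hi < n) (R2 := fun lo hi => n <= hi)); last lia.
    * apply/allP => u /mapP[p /mapP[q qL ->] ->] /=; apply/allo8P => i.
      rewrite !tnth_map; exact: maxW_lt.
    * apply/allP => u; rewrite /newL map_cat mem_cat => /orP[] hu.
      - have [pc hpc hR] := flat_reg hn he (u := u) (ltac:(by rewrite mem_cat hu orbT)).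
        by apply: inR_mono hR => x y _; rewrite /RK; lia.
      - case/andP: (pieceG_reg hn he) => _ g2.
        by apply: inR_mono (allP g2 _ hu) => x y; rewrite /RG; lia.
- rewrite size_cat size_map /newL size_cat size_flatten /shape -map_comp.
  rewrite (sumn_const2 (F := fun pc => size (@pieceK n e pc))); last by [].
  rewrite size_allpairs !size_iota /pieceG size_map size_Gd.
  case/orP: he hn => /eqP -> hn /=; nia.
Qed.


Lemma inord_inj12 : {in (fun x : nat => x < 12) &, injective (fun x => inord x : 'I_12)}.
Proof. by move=> x y hx hy /(congr1 (@nat_of_ord _)); rewrite !inordK. Qed.
Lemma inord_inj14 : {in (fun x : nat => x < 14) &, injective (fun x => inord x : 'I_14)}.
Proof. by move=> x y hx hy /(congr1 (@nat_of_ord _)); rewrite !inordK. Qed.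

Lemma P12 : Pn 12.
Proof.
exists (map (mapPr (fun x => inord x : 'I_12)) B12); split; last by rewrite size_map.
apply: (Good_map (D := fun x : nat => x < 12)); first exact: inord_inj12.
- by vm_compute.
- exact: B12_good.
Qed.

Lemma P14 : Pn 14.
Proof.
exists (map (mapPr (fun x => inord x : 'I_14)) B14); split; last by rewrite size_map.
apply: (Good_map (D := fun x : nat => x < 14)); first exact: inord_inj14.
- by vm_compute.
- exact: B14_good.
Qed.

Lemma allk k : Pn (12 + 8 * k) /\ Pn (14 + 8 * k).
Proof.
elim: k => [|k [IH1 IH2]]; first by split; [exact: P12 | exact: P14].
have -> : 12 + 8 * k.+1 = (12 + 8 * k).+4.+4 by lia.
have -> : 14 + 8 * k.+1 = (14 + 8 * k).+4.+4 by lia.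
split.
- apply: (step (e := 0) (PP := 3 + 2 * k)) => //; lia.
- apply: (step (e := 2) (PP := 3 + 2 * k)) => //; lia.
Qed.

Unset Implicit Arguments.
Theorem lemma3p10 (n : nat) :
  12 <= n -> n %% 16 \in [:: 4; 6; 12; 14] ->
  exists CC : {set {set {set 'I_n}}},
    is_max_8cycle_packing CC /\ almost_2_perfect CC.
Proof.
move=> h12 hmod.
have [ev PnN] : n %% 2 = 0 /\ Pn n.
  move: hmod; rewrite !inE => /or4P[] /eqP hm.
  - have -> : n = 12 + 8 * ((n - 12) %/ 8) by lia.
    by split; [lia | case: (allk ((n - 12) %/ 8))].
  - have -> : n = 14 + 8 * ((n - 14) %/ 8) by lia.
    by split; [lia | case: (allk ((n - 14) %/ 8))].
  - have -> : n = 12 + 8 * ((n - 12) %/ 8) by lia.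
    by split; [lia | case: (allk ((n - 12) %/ 8))].
  - have -> : n = 14 + 8 * ((n - 14) %/ 8) by lia.
    by split; [lia | case: (allk ((n - 14) %/ 8))].
case: PnN => L [HG HS].
exists (CCL L); split; last exact: a2p_CCL.
split; first exact: packing_CCL.
move=> CC' HP.
have h0 := leave_card (packing_CCL HG).
have h1 := leave_card HP.
have h2 := leave_lb HP (ltac:(by move: ev; rewrite modn2; case: (odd n))).
rewrite (card_CCL HG) in h0.
move: h0 h1 h2 HS; rewrite bin2 -divn2 -subn1.
set M := n * (n - 1); set l0 := #|leave (CCL L)|; set l := #|leave CC'|.
lia.
Qed.
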